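(* Let $f(r)=r$ and $q_0\notin\Sigma$. For every initial covector $$\lambda_0\in E_1^*:=E_1\setminus(\{K=0\}\cup\{L=0\}\cup\{w_0=0\}),$$ the unit-speed normal trajectory $\gamma(\cdot;\lambda_0)$ from $q_0$ has first conjugate time $t_{\mathrm{con}}=\pi/|w_0|$.
   Context: Consider $\mathbb R^3$ with points $q=(x,y,z)$, $r=\sqrt{x^2+y^2}$, $\Sigma=\{r=0\}$, and $f(r)=r$. Let $q_0=(x_0,y_0,z_0)$ and $r_0=\sqrt{x_0^2+y_0^2}$. Normal trajectories are projections of solutions of $$\dot x=u,\quad \dot y=v,\quad \dot z=r^2w,\quad \dot u=-w^2x,\quad \dot v=-w^2y,\quad \dot w=0,$$ with initial covector $\lambda_0=(u_0,v_0,w_0)$. Energy shell and coordinates: - $E_1=\{\lambda_0:u_0^2+v_0^2+r_0^2w_0^2=1\}$ is the unit energy shell. - $K=x_0v_0-y_0u_0$ and $L=x_0u_0+y_0v_0$. Exponential map and conjugate time: - $\mathrm{Exp}_{q_0}(\lambda_0)=\gamma(1;\lambda_0)$. - $t_{\mathrm{con}}(\gamma)=\inf\{t>0:\mathrm{Exp}_{q_0}\text{ has a critical point at }t\lambda_0\}$. *)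

(* Defs.v *)
From Stdlib Require Import Reals ClassicalEpsilon.
From Coquelicot Require Import Coquelicot.
Open Scope R_scope.

(* A curve in the cotangent bundle T*R^3: components x,y,z,u,v,w as functions of time. *)
Record curve6 := Curve6 {
  cx : R -> R; cy : R -> R; cz : R -> R;
  cu : R -> R; cv : R -> R; cw : R -> R }.

Definition zero_curve6 : curve6 :=
  Curve6 (fun _ => 0) (fun _ => 0) (fun _ => 0) (fun _ => 0) (fun _ => 0) (fun _ => 0).

(* Normal Hamiltonian system for f(r) = r (so f(r)^2 = r^2 = x^2 + y^2):
   x' = u, y' = v, z' = r^2 w, u' = -w^2 x, v' = -w^2 y, w' = 0,
   with initial point q0 = (x0,y0,z0) and initial covector l0 = (u0,v0,w0).
   Solutions are required on all of R (they exist globally: the system is linear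
   in (x,y,u,v) once w is constant). *)
Definition is_normal_solution (q0 l0 : R * R * R) (c : curve6) : Prop :=
  let '(x0, y0, z0) := q0 in
  let '(u0, v0, w0) := l0 in
  cx c 0 = x0 /\ cy c 0 = y0 /\ cz c 0 = z0 /\
  cu c 0 = u0 /\ cv c 0 = v0 /\ cw c 0 = w0 /\
  forall t : R,
    is_derive (cx c) t (cu c t) /\
    is_derive (cy c) t (cv c t) /\
    is_derive (cz c) t ((cx c t ^ 2 + cy c t ^ 2) * cw c t) /\
    is_derive (cu c) t (- (cw c t) ^ 2 * cx c t) /\
    is_derive (cv c) t (- (cw c t) ^ 2 * cy c t) /\
    is_derive (cw c) t 0.

Definition normal_lift (q0 l0 : R * R * R) : curve6 :=
  epsilon (inhabits zero_curve6) (is_normal_solution q0 l0).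

Definition gamma (q0 l0 : R * R * R) (t : R) : R * R * R :=
  let c := normal_lift q0 l0 in (cx c t, cy c t, cz c t).

Definition Exp (q0 : R * R * R) (l0 : R * R * R) : R * R * R := gamma q0 l0 1.

Definition critical_point (F : R * R * R -> R * R * R) (p : R * R * R) : Prop :=
  exists l : R * R * R -> R * R * R,
    filterdiff F (locally p) l /\ ~ (forall y, exists x, l x = y).

Definition scal3 (t : R) (l : R * R * R) : R * R * R :=
  let '(a, b, c) := l in (t * a, t * b, t * c).

Definition t_con (q0 l0 : R * R * R) : Rbar :=
  Glb_Rbar (fun t => 0 < t /\ critical_point (Exp q0) (scal3 t l0)).

(* Main.v *)
Require Import Defs.
From Stdlib Require Import Reals Lra Psatz ClassicalEpsilon.
From Coquelicot Require Import Coquelicot.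
Open Scope R_scope.



Definition solc (a b z0 u0 v0 w0 : R) : curve6 := Curve6
 (fun t => a * cos (w0*t) + u0 / w0 * sin (w0*t))
 (fun t => b * cos (w0*t) + v0 / w0 * sin (w0*t))
 (fun t => z0 + (a^2+b^2) * (w0*t + sin(w0*t)*cos(w0*t))/2
    + (u0^2+v0^2)*(w0*t - sin(w0*t)*cos(w0*t))/(2*w0^2)
    + (a*u0+b*v0)*sin(w0*t)^2/w0)
 (fun t => - a*w0*sin(w0*t) + u0*cos(w0*t))
 (fun t => - b*w0*sin(w0*t) + v0*cos(w0*t))
 (fun _ => w0).

Lemma solc_ok a b z0 u0 v0 w0 : w0 <> 0 ->
  is_normal_solution (a,b,z0) (u0,v0,w0) (solc a b z0 u0 v0 w0).
Proof.
  intro Hw. unfold is_normal_solution, solc; simpl.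
  rewrite Rmult_0_r, sin_0, cos_0.
  do 6 (split; [ try field; auto | ]).
  intro t. split; [|split; [|split; [|split; [|split]]]].
  - auto_derive; auto. field; auto.
  - auto_derive; auto. field; auto.
  - auto_derive; auto.
    assert (E: sin (w0*t)^2 + cos (w0*t)^2 = 1) by (rewrite <- !Rsqr_pow2; apply sin2_cos2).
    set (s := sin (w0*t)) in *. set (c := cos (w0*t)) in *. clearbody s c.
    apply (@eq_trans R _ (((a * c + u0 / w0 * s) ^ 2 + (b * c + v0 / w0 * s) ^ 2) * w0 + (1 - s^2 - c^2)*((a^2+b^2)*w0/2 + (u0^2+v0^2)/(2*w0))) _).
    + field; auto.
    + replace (1 - s^2 - c^2) with 0 by lra. field; auto.
  - auto_derive; auto. field; auto.
  - auto_derive; auto. field; auto.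
  - apply (is_derive_const w0 t).
Qed.

Lemma const_deriv0 (f : R -> R) : (forall t, is_derive f t 0) -> forall t, f t = f 0.
Proof.
  intros H t. destruct (Rtotal_order t 0) as [Hl|[He|Hg]].
  - apply (eq_is_derive f t 0); [intros; apply H | exact Hl].
  - subst; reflexivity.
  - symmetry; apply (eq_is_derive f 0 t); [intros; apply H | exact Hg].
Qed.

Lemma sol_unique a b z0 u0 v0 w0 c : w0 <> 0 ->
  is_normal_solution (a,b,z0) (u0,v0,w0) c ->
  forall t, cx c t = cx (solc a b z0 u0 v0 w0) t /\ cy c t = cy (solc a b z0 u0 v0 w0) t
         /\ cz c t = cz (solc a b z0 u0 v0 w0) t.
Proof.
  intros Hw H.
  pose proof (solc_ok a b z0 u0 v0 w0 Hw) as S.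
  remember (solc a b z0 u0 v0 w0) as s eqn:Es.
  destruct H as (Hx0&Hy0&Hz0&Hu0&Hv0&Hw0&HD).
  destruct S as (Sx0&Sy0&Sz0&Su0&Sv0&Sw0&SD).
  assert (HW : forall t, cw c t = w0).
  { intro t. rewrite <- Hw0. apply const_deriv0. intro; apply HD. }
  assert (SW : forall t, cw s t = w0) by (intro; subst s; reflexivity).
  assert (HX : forall t, cx c t = cx s t /\ cu c t = cu s t).
  { assert (E : forall t, is_derive (fun t => w0^2 * (cx c t - cx s t)^2 + (cu c t - cu s t)^2) t 0).
    { intro t. destruct (HD t) as (dx&dy&dz&du&dv&dw).
      destruct (SD t) as (ex&ey&ez&eu&ev&ew).
      auto_derive.
      { repeat split; eexists; eauto. }
      replace (Derive (fun x => cx c x) t) with (cu c t) by (symmetry; apply is_derive_unique; auto).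
      replace (Derive (fun x => cu c x) t) with (- cw c t ^ 2 * cx c t) by (symmetry; apply is_derive_unique; auto).
      replace (Derive (fun x => cx s x) t) with (cu s t) by (symmetry; apply is_derive_unique; auto).
      replace (Derive (fun x => cu s x) t) with (- cw s t ^ 2 * cx s t) by (symmetry; apply is_derive_unique; auto).
      rewrite HW, SW. ring. }
    intro t. pose proof (const_deriv0 _ E t) as E0. simpl in E0.
    rewrite Hx0, Hu0, Sx0, Su0 in E0.
    assert (A : (cx c t - cx s t) = 0 /\ cu c t - cu s t = 0).
    { set (p := cx c t - cx s t) in *. set (q := cu c t - cu s t) in *. clearbody p q.
      assert (Z : w0^2 * p^2 + q^2 = 0) by (simpl in *; lra).
      assert (W : 0 < w0^2) by (apply pow2_gt_0; auto).
      assert (q = 0) by nra. subst q. split; auto.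
      assert (Z2 : w0^2 * p^2 = 0) by lra.
      apply Rmult_integral in Z2. destruct Z2 as [Z2|Z2]; [lra|]. simpl in Z2. rewrite Rmult_1_r in Z2. apply Rmult_integral in Z2. tauto. }
    split; lra. }
  assert (HY : forall t, cy c t = cy s t /\ cv c t = cv s t).
  { assert (E : forall t, is_derive (fun t => w0^2 * (cy c t - cy s t)^2 + (cv c t - cv s t)^2) t 0).
    { intro t. destruct (HD t) as (dy'&dx&dz&dv'&du&dw).
      destruct (SD t) as (ey'&ex&ez&ev'&eu&ew).
      auto_derive.
      { repeat split; eexists; eauto. }
      replace (Derive (fun x => cy c x) t) with (cv c t) by (symmetry; apply is_derive_unique; auto).
      replace (Derive (fun x => cv c x) t) with (- cw c t ^ 2 * cy c t) by (symmetry; apply is_derive_unique; auto).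
      replace (Derive (fun x => cy s x) t) with (cv s t) by (symmetry; apply is_derive_unique; auto).
      replace (Derive (fun x => cv s x) t) with (- cw s t ^ 2 * cy s t) by (symmetry; apply is_derive_unique; auto).
      rewrite HW, SW. ring. }
    intro t. pose proof (const_deriv0 _ E t) as E0. simpl in E0.
    rewrite Hy0, Hv0, Sy0, Sv0 in E0.
    assert (A : (cy c t - cy s t) = 0 /\ cv c t - cv s t = 0).
    { set (p := cy c t - cy s t) in *. set (q := cv c t - cv s t) in *. clearbody p q.
      assert (Z : w0^2 * p^2 + q^2 = 0) by (simpl in *; lra).
      assert (W : 0 < w0^2) by (apply pow2_gt_0; auto).
      assert (q = 0) by nra. subst q. split; auto.
      assert (Z2 : w0^2 * p^2 = 0) by lra.
      apply Rmult_integral in Z2. destruct Z2 as [Z2|Z2]; [lra|]. simpl in Z2. rewrite Rmult_1_r in Z2. apply Rmult_integral in Z2. tauto. }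
    split; lra. }
  assert (HZ : forall t, cz c t = cz s t).
  { assert (E : forall t, is_derive (fun t => cz c t - cz s t) t 0).
    { intro t. destruct (HD t) as (dx&dy&dz&du&dv&dw).
      destruct (SD t) as (ex&ey&ez&eu&ev&ew).
      auto_derive.
      { repeat split; eexists; eauto. }
      replace (Derive (fun x => cz c x) t) with ((cx c t ^ 2 + cy c t ^ 2) * cw c t) by (symmetry; apply is_derive_unique; auto).
      replace (Derive (fun x => cz s x) t) with ((cx s t ^ 2 + cy s t ^ 2) * cw s t) by (symmetry; apply is_derive_unique; auto).
      destruct (HX t) as [-> _]. destruct (HY t) as [-> _]. rewrite HW, SW. ring. }
    intro t. pose proof (const_deriv0 _ E t) as E0. simpl in E0. lra. }
  intro t. destruct (HX t); destruct (HY t); auto.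
Qed.



Definition lin3 (gu gv gw : R) (h : R*R*R) : R := gu * fst (fst h) + gv * snd (fst h) + gw * snd h.
Definition D3 (f : R*R*R -> R) (p : R*R*R) (gu gv gw : R) : Prop :=
  filterdiff f (locally p) (lin3 gu gv gw).

Lemma D3_U p : D3 (fun q => fst (fst q)) p 1 0 0.
Proof.
  unfold D3. eapply filterdiff_ext_lin.
  - apply filterdiff_linear. apply (is_linear_comp (fun t : R*R*R => fst t) (fun t : R*R => fst t));
    [apply is_linear_fst | apply is_linear_fst].
  - intro; unfold lin3; cbn; ring.
Qed.
Lemma D3_V p : D3 (fun q => snd (fst q)) p 0 1 0.
Proof.
  unfold D3. eapply filterdiff_ext_lin.
  - apply filterdiff_linear. apply (is_linear_comp (fun t : R*R*R => fst t) (fun t : R*R => snd t));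
    [apply is_linear_fst | apply is_linear_snd].
  - intro; unfold lin3; cbn; ring.
Qed.
Lemma D3_W p : D3 (fun q => snd q) p 0 0 1.
Proof.
  unfold D3. eapply filterdiff_ext_lin.
  - apply filterdiff_linear. apply is_linear_snd.
  - intro; unfold lin3; cbn; ring.
Qed.
Lemma D3_const p c : D3 (fun _ => c) p 0 0 0.
Proof.
  unfold D3. eapply filterdiff_ext_lin.
  - apply filterdiff_const.
  - intro; unfold lin3; simpl. apply (@eq_trans R _ 0); [reflexivity | ring].
Qed.
Lemma D3_plus f g p fu fv fw gu gv gw : D3 f p fu fv fw -> D3 g p gu gv gw ->
  D3 (fun q => f q + g q) p (fu+gu) (fv+gv) (fw+gw).
Proof.
  unfold D3; intros Hf Hg. eapply filterdiff_ext_lin.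
  - apply (filterdiff_plus_fct _ _ _ _ Hf Hg).
  - intro; unfold lin3; cbn; ring.
Qed.
Lemma D3_mult f g p fu fv fw gu gv gw : D3 f p fu fv fw -> D3 g p gu gv gw ->
  D3 (fun q => f q * g q) p (fu * g p + f p * gu) (fv * g p + f p * gv) (fw * g p + f p * gw).
Proof.
  unfold D3; intros Hf Hg. eapply filterdiff_ext_lin.
  - apply (filterdiff_mult_fct f g p _ _ Rmult_comm Hf Hg).
  - intro; unfold lin3; cbn; ring.
Qed.
Lemma D3_comp (g : R -> R) dg f p fu fv fw : D3 f p fu fv fw -> is_derive g (f p) dg ->
  D3 (fun q => g (f q)) p (fu * dg) (fv * dg) (fw * dg).
Proof.
  unfold D3; intros Hf Hg. eapply filterdiff_ext_lin.
  - apply (filterdiff_comp' f g p _ _ Hf Hg).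
  - intro; unfold lin3; cbn; ring.
Qed.
Lemma D3_cos f p fu fv fw : D3 f p fu fv fw ->
  D3 (fun q => cos (f q)) p (fu * - sin (f p)) (fv * - sin (f p)) (fw * - sin (f p)).
Proof. intro H. apply (D3_comp cos); auto. apply is_derive_cos. Qed.
Lemma D3_sin f p fu fv fw : D3 f p fu fv fw ->
  D3 (fun q => sin (f q)) p (fu * cos (f p)) (fv * cos (f p)) (fw * cos (f p)).
Proof. intro H. apply (D3_comp sin); auto. apply is_derive_sin. Qed.
Lemma D3_inv f p fu fv fw : f p <> 0 -> D3 f p fu fv fw ->
  D3 (fun q => / (f q)) p (fu * (- / (f p ^ 2))) (fv * (- / (f p ^ 2))) (fw * (- / (f p ^ 2))).
Proof. intros Hp H. apply (D3_comp (fun x => / x)); auto. auto_derive; auto. field; auto. Qed.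

Lemma D3_triple f1 f2 f3 p a1 b1 c1 a2 b2 c2 a3 b3 c3 :
  D3 f1 p a1 b1 c1 -> D3 f2 p a2 b2 c2 -> D3 f3 p a3 b3 c3 ->
  filterdiff (fun q => (f1 q, f2 q, f3 q)) (locally p)
    (fun h => (lin3 a1 b1 c1 h, lin3 a2 b2 c2 h, lin3 a3 b3 c3 h)).
Proof.
  unfold D3; intros H1 H2 H3.
  assert (Hp : forall (U V : NormedModule R_AbsRing) (x : U * V),
    filterdiff (fun t : prod_NormedModule R_AbsRing U V => (fst t, snd t)) (locally x)
      (fun t : prod_NormedModule R_AbsRing U V => (fst t, snd t))).
  { intros. apply filterdiff_linear. apply is_linear_prod; [apply is_linear_fst|apply is_linear_snd]. }
  apply (filterdiff_comp'_2 (fun q => (f1 q, f2 q)) f3 (fun x y => (x, y)) p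
     (fun h => (lin3 a1 b1 c1 h, lin3 a2 b2 c2 h)) _ (fun x y => (x,y))); auto.
  apply (filterdiff_comp'_2 f1 f2 (fun x y => (x, y)) p _ _ (fun x y => (x,y))); auto.
Qed.

Lemma dir_deriv (F : R*R*R -> R*R*R) p l e (pi : R*R*R -> R) :
  filterdiff F (locally p) l -> is_linear (V := R_NormedModule) pi ->
  is_derive (fun k => pi (F (plus p (scal k e)))) 0 (pi (l e)).
Proof.
  intros HF Hpi.
  assert (A : filterdiff (fun k : R_AbsRing => plus p (scal k e)) (locally 0)
               (fun k => plus zero (scal k e))).
  { apply filterdiff_plus_fct; try apply locally_filter.
    - apply filterdiff_const; apply locally_filter.
    - apply filterdiff_scal_l; apply locally_filter. }
  assert (B : filterdiff F (locally (plus p (scal (0:R_AbsRing) e))) l).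
  { assert (E : plus p (scal (0:R_AbsRing) e) = p).
    { destruct p as [[p1 p2] p3], e as [[e1 e2] e3]. change (plus (p1, p2, p3) (scal (0:R_AbsRing) (e1, e2, e3))) with ((p1 + 0*e1, p2 + 0*e2, p3 + 0*e3)). rewrite !Rmult_0_l, !Rplus_0_r. reflexivity. }
    rewrite E. exact HF. }
  pose proof (filterdiff_comp' _ _ 0 _ _ A B) as C.
  pose proof (filterdiff_comp' _ pi 0 _ pi C (filterdiff_linear pi Hpi)) as D.
  unfold is_derive. eapply filterdiff_ext_lin. exact D.
  intro k. simpl. rewrite plus_zero_l.
  destruct HF as [Hl _].
  rewrite (linear_scal l Hl), (linear_scal pi Hpi). reflexivity.
Qed.

Lemma fd_unique (F : R*R*R -> R*R*R) p l1 l2 :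
  filterdiff F (locally p) l1 -> filterdiff F (locally p) l2 -> forall e, l1 e = l2 e.
Proof.
  intros H1 H2 e.
  assert (K : forall pi : R*R*R -> R, is_linear (V := R_NormedModule) pi -> pi (l1 e) = pi (l2 e)).
  { intros pi Hpi.
    rewrite <- (is_derive_unique _ _ _ (dir_deriv F p l1 e pi H1 Hpi)).
    rewrite <- (is_derive_unique _ _ _ (dir_deriv F p l2 e pi H2 Hpi)).
    reflexivity. }
  assert (K1 := K (fun x => fst (fst x)) (is_linear_comp (fun t : R*R*R => fst t) (fun t : R*R => fst t) is_linear_fst is_linear_fst)).
  assert (K2 := K (fun x => snd (fst x)) (is_linear_comp (fun t : R*R*R => fst t) (fun t : R*R => snd t) is_linear_fst is_linear_snd)).
  assert (K3 := K (fun x => snd x) is_linear_snd).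
  simpl in K1, K2, K3.
  destruct (l1 e) as [[x1 y1] z1]; destruct (l2 e) as [[x2 y2] z2]. simpl in *. congruence.
Qed.



Definition Ex (a : R) (q : R*R*R) : R :=
  a * cos (snd q) + fst (fst q) * / snd q * sin (snd q).
Definition Ey (b : R) (q : R*R*R) : R :=
  b * cos (snd q) + snd (fst q) * / snd q * sin (snd q).
Definition Ez (a b z0 : R) (q : R*R*R) : R :=
  z0 + (a*a+b*b) * (snd q + sin (snd q) * cos (snd q)) * / 2
  + (fst (fst q) * fst (fst q) + snd (fst q) * snd (fst q)) * (snd q - sin (snd q) * cos (snd q)) * / (2 * (snd q * snd q))
  + (a * fst (fst q) + b * snd (fst q)) * (sin (snd q) * sin (snd q)) * / snd q.
Definition Eexp (a b z0 : R) (q : R*R*R) : R*R*R := (Ex a q, Ey b q, Ez a b z0 q).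

Lemma Exp_eq a b z0 u v w : w <> 0 -> Exp (a,b,z0) (u,v,w) = Eexp a b z0 (u,v,w).
Proof.
  intro Hw. unfold Exp, gamma, normal_lift.
  set (c := epsilon _ _).
  assert (Hc : is_normal_solution (a,b,z0) (u,v,w) c).
  { apply epsilon_spec. exists (solc a b z0 u v w). apply solc_ok; auto. }
  destruct (sol_unique a b z0 u v w c Hw Hc 1) as (E1&E2&E3).
  rewrite E1, E2, E3. unfold Eexp, Ex, Ey, Ez, solc; simpl. rewrite Rmult_1_r.
  f_equal; try f_equal; field; auto.
Qed.

Lemma D3_ext f p a b c a' b' c' : D3 f p a b c -> a = a' -> b = b' -> c = c' -> D3 f p a' b' c'.
Proof. intros H -> -> ->; exact H. Qed.
Lemma D3_opp f p fu fv fw : D3 f p fu fv fw -> D3 (fun q => - f q) p (- fu) (- fv) (- fw).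
Proof.
  unfold D3; intro H. eapply filterdiff_ext_lin.
  - apply (filterdiff_ext (fun q => opp (f q)) (fun q => - f q) (fun q => opp (lin3 fu fv fw q))).
    + intro; reflexivity.
    + exact (filterdiff_opp_fct _ _ H).
  - intro; unfold lin3; cbn; ring.
Qed.
Lemma D3_minus f g p fu fv fw gu gv gw : D3 f p fu fv fw -> D3 g p gu gv gw ->
  D3 (fun q => f q - g q) p (fu-gu) (fv-gv) (fw-gw).
Proof.
  intros Hf Hg. apply (D3_plus f (fun q => - g q)); auto. apply D3_opp; auto.
Qed.

Ltac d3 :=
  lazymatch goal with
  | |- D3 (fun q => fst (fst q)) _ _ _ _ => apply D3_U
  | |- D3 (fun q => snd (fst q)) _ _ _ _ => apply D3_V
  | |- D3 (fun q => snd q) _ _ _ _ => apply D3_W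
  | |- D3 (fun _ => ?c) _ _ _ _ => apply (D3_const _ c)
  | |- D3 (fun q => @?f q + @?g q) _ _ _ _ => eapply (D3_plus f g); [d3|d3]
  | |- D3 (fun q => @?f q - @?g q) _ _ _ _ => eapply (D3_minus f g); [d3|d3]
  | |- D3 (fun q => @?f q * @?g q) _ _ _ _ => eapply (D3_mult f g); [d3|d3]
  | |- D3 (fun q => - @?f q) _ _ _ _ => eapply (D3_opp f); d3
  | |- D3 (fun q => cos (@?f q)) _ _ _ _ => eapply (D3_cos f); d3
  | |- D3 (fun q => sin (@?f q)) _ _ _ _ => eapply (D3_sin f); d3
  | |- D3 (fun q => / (@?f q)) _ _ _ _ => eapply (D3_inv f); [ | d3]
  end.

Lemma Ex_D3 a u v w : w <> 0 ->
  D3 (Ex a) (u,v,w) (sin w / w) 0 (- a * sin w + u * (w * cos w - sin w) / w^2).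
Proof.
  intro Hw. unfold Ex. eapply D3_ext; [d3| | |].
  all: cbn [fst snd]; auto; field; auto.
Qed.

Lemma Ey_D3 b u v w : w <> 0 ->
  D3 (Ey b) (u,v,w) 0 (sin w / w) (- b * sin w + v * (w * cos w - sin w) / w^2).
Proof.
  intro Hw. unfold Ey. eapply D3_ext; [d3| | |].
  all: cbn [fst snd]; auto; field; auto.
Qed.

Lemma Ez_D3 a b z0 u v w : w <> 0 ->
  D3 (Ez a b z0) (u,v,w)
    (u * (w - sin w * cos w) / w^2 + a * sin w ^ 2 / w)
    (v * (w - sin w * cos w) / w^2 + b * sin w ^ 2 / w)
    ((a^2+b^2) * cos w ^ 2 + (u^2+v^2) * (sin w ^2 * w - w + sin w * cos w) / w^3
      + (a*u+b*v) * (2 * sin w * cos w * w - sin w ^ 2) / w^2).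
Proof.
  intro Hw. unfold Ez. eapply D3_ext; [d3| | |].
  all: cbn [fst snd].
  all: try (match goal with |- ?x <> 0 => solve [auto | lra | (apply Rmult_integral_contrapositive; split; [lra| apply Rmult_integral_contrapositive; auto])] end).
  all: try solve [field; auto].
  assert (E: sin w ^ 2 + cos w ^ 2 = 1) by (rewrite <- !Rsqr_pow2; apply sin2_cos2).
    apply (@eq_trans R _ ((a^2+b^2) * cos w ^ 2 + (u^2+v^2) * (sin w ^2 * w - w + sin w * cos w) / w^3
      + (a*u+b*v) * (2 * sin w * cos w * w - sin w ^ 2) / w^2
      + (1 - sin w ^ 2 - cos w ^ 2) * ((a^2+b^2)/2 + (u^2+v^2)/(2*w^2))) _).
  + field; auto.
  + replace (1 - sin w ^ 2 - cos w ^ 2) with 0 by lra. ring.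
Qed.

Definition Lmap (a b u v w : R) (h : R*R*R) : R*R*R :=
  (lin3 (sin w / w) 0 (- a * sin w + u * (w * cos w - sin w) / w^2) h,
   lin3 0 (sin w / w) (- b * sin w + v * (w * cos w - sin w) / w^2) h,
   lin3 (u * (w - sin w * cos w) / w^2 + a * sin w ^ 2 / w)
        (v * (w - sin w * cos w) / w^2 + b * sin w ^ 2 / w)
        ((a^2+b^2) * cos w ^ 2 + (u^2+v^2) * (sin w ^2 * w - w + sin w * cos w) / w^3
          + (a*u+b*v) * (2 * sin w * cos w * w - sin w ^ 2) / w^2) h).

Lemma Exp_diff a b z0 u v w : w <> 0 ->
  filterdiff (Exp (a,b,z0)) (locally (u,v,w)) (Lmap a b u v w).
Proof.
  intro Hw.
  apply (filterdiff_ext_locally (Eexp a b z0)).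
  - assert (Hpos : 0 < Rabs w) by (apply Rabs_pos_lt; auto).
    exists (mkposreal _ Hpos). intros [[y1 y2] y3] Hb.
    destruct Hb as [_ Hb]. change (Rabs (y3 + - w) < Rabs w) in Hb.
    assert (y3 <> 0).
    { intro H0; subst y3. rewrite Rplus_0_l, Rabs_Ropp in Hb. lra. }
    symmetry; apply Exp_eq; auto.
  - unfold Lmap. apply (D3_triple (Ex a) (Ey b) (Ez a b z0)).
    + apply Ex_D3; auto.
    + apply Ey_D3; auto.
    + apply Ez_D3; auto.
Qed.



Lemma k_pos (phi : R) : 0 < phi < PI -> 0 < sin phi - phi * cos phi.
Proof.
  intros [H1 H2].
  destruct (MVT_cor2 (fun x => sin x - x * cos x) (fun x => x * sin x) 0 phi H1) as [c [Hc1 Hc2]].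
  { intros c _. apply is_derive_Reals. auto_derive; auto. ring. }
  rewrite sin_0, Rmult_0_l in Hc1.
  assert (0 < sin c) by (apply sin_gt_0; lra).
  assert (0 < c * sin c * (phi - 0)) by (apply Rmult_lt_0_compat; [apply Rmult_lt_0_compat|]; lra).
  lra.
Qed.

Lemma h_pos (phi : R) : 0 < phi < PI -> 0 < 4 * (sin phi - phi * cos phi) - phi^2 * sin phi.
Proof.
  intros [H1 H2].
  destruct (MVT_cor2 (fun x => 4 * (sin x - x * cos x) - x^2 * sin x)
    (fun x => x * (sin x + (sin x - x * cos x))) 0 phi H1) as [c [Hc1 Hc2]].
  { intros c _. apply is_derive_Reals. auto_derive; auto. ring. }
  rewrite sin_0 in Hc1.
  assert (0 < sin c) by (apply sin_gt_0; lra).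
  assert (0 < sin c - c * cos c) by (apply k_pos; lra).
  assert (0 < c * (sin c + (sin c - c * cos c)) * (phi - 0)) by (apply Rmult_lt_0_compat; [apply Rmult_lt_0_compat|]; lra).
  replace (4 * (0 - 0 * cos 0) - 0 ^ 2 * 0) with 0 in Hc1 by ring.
  lra.
Qed.

Lemma key (phi A B M : R) : 0 < phi < PI -> 0 <= A -> 0 <= B -> 0 < A + B -> M^2 <= A*B ->
  0 < sin phi * A + sin phi * phi * M + (sin phi - phi * cos phi) * B.
Proof.
  intros Hphi HA HB HAB HM.
  assert (HS : 0 < sin phi) by (apply sin_gt_0; lra).
  pose proof (k_pos phi Hphi) as Hk. pose proof (h_pos phi Hphi) as Hh.
  set (k := sin phi - phi * cos phi) in *. set (S := sin phi) in *. clearbody S k.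
  assert (P1 : 0 < S * A + k * B).
  { destruct (Rle_lt_dec A 0).
    - assert (A = 0) by lra. assert (0 < B) by lra. rewrite H. assert (0 < k * B) by (apply Rmult_lt_0_compat; lra). lra.
    - assert (0 < S * A) by (apply Rmult_lt_0_compat; lra). assert (0 <= k * B) by (apply Rmult_le_pos; lra). lra. }
  destruct (Req_dec M 0) as [->|HM0].
  { lra. }
  set (Q := S * phi * M).
  assert (P2 : (S * A + k * B)^2 >= 4 * S * k * (A * B)).
  { assert (E : (S*A+k*B)^2 - 4*S*k*(A*B) = (S*A - k*B)^2) by ring.
    pose proof (pow2_ge_0 (S*A - k*B)). lra. }
  assert (P3 : 4 * S * k * (A * B) >= 4 * S * k * M^2).
  { assert (0 <= 4 * S * k) by (apply Rmult_le_pos; lra). apply Rle_ge, Rmult_le_compat_l; [assumption | exact HM]. }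
  assert (P4 : 4 * S * k * M^2 > Q^2).
  { unfold Q. assert (0 < M^2) by (apply pow2_gt_0; auto).
    assert (0 < S * (4 * k - phi^2 * S)) by (apply Rmult_lt_0_compat; lra).
    assert (E : 4 * S * k * M^2 - (S * phi * M)^2 = M^2 * (S * (4 * k - phi^2 * S))) by ring.
    assert (0 < M^2 * (S * (4 * k - phi^2 * S))) by (apply Rmult_lt_0_compat; lra).
    lra. }
  set (X := S * A + k * B) in *.
  destruct (Rle_lt_dec (X + Q) 0) as [Hc|Hc]; [|unfold X in Hc; lra].
  exfalso.
  assert (0 <= (-Q - X) * (-Q + X)) by (apply Rmult_le_pos; lra).
  assert (E : (-Q - X) * (-Q + X) = Q^2 - X^2) by ring.
  lra.
Qed.

Lemma surj3 s1 X Y Zu Zv Zw : s1 <> 0 -> s1 * Zw - X * Zu - Y * Zv <> 0 ->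
  forall y : R*R*R, exists h, (lin3 s1 0 X h, lin3 0 s1 Y h, lin3 Zu Zv Zw h) = y.
Proof.
  intros H1 H2 [[y1 y2] y3].
  set (D := s1 * Zw - X * Zu - Y * Zv) in *.
  set (h3 := (s1 * y3 - Zu * y1 - Zv * y2) / D).
  exists ((y1 - X * h3) / s1, (y2 - Y * h3) / s1, h3).
  unfold lin3; simpl. f_equal; [f_equal|].
  - field; auto.
  - field; auto.
  - unfold h3, D in *. field; auto.
Qed.

Lemma D_closed a b u v w : w <> 0 ->
  sin w / w * ((a^2+b^2) * cos w ^ 2 + (u^2+v^2) * (sin w ^2 * w - w + sin w * cos w) / w^3
          + (a*u+b*v) * (2 * sin w * cos w * w - sin w ^ 2) / w^2)
  - (- a * sin w + u * (w * cos w - sin w) / w^2) * (u * (w - sin w * cos w) / w^2 + a * sin w ^ 2 / w)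
  - (- b * sin w + v * (w * cos w - sin w) / w^2) * (v * (w - sin w * cos w) / w^2 + b * sin w ^ 2 / w)
  = sin w / w * ((a^2+b^2) + (a*u+b*v)) + (sin w - w * cos w) / w^3 * (u^2+v^2).
Proof.
  intro Hw.
  assert (E: sin w ^ 2 + cos w ^ 2 = 1) by (rewrite <- !Rsqr_pow2; apply sin2_cos2).
  apply (@eq_trans R _ (sin w / w * ((a^2+b^2) + (a*u+b*v)) + (sin w - w * cos w) / w^3 * (u^2+v^2)
     + (sin w ^ 2 + cos w ^ 2 - 1) * ((a^2+b^2) * sin w / w + (u^2+v^2) * sin w / w^3)) _).
  - field; auto.
  - replace (sin w ^ 2 + cos w ^ 2 - 1) with 0 by lra. ring.
Qed.

Lemma not_crit a b z0 u v w : w <> 0 -> sin w <> 0 ->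
  sin w / w * ((a^2+b^2) + (a*u+b*v)) + (sin w - w * cos w) / w^3 * (u^2+v^2) <> 0 ->
  ~ critical_point (Exp (a,b,z0)) (u,v,w).
Proof.
  intros Hw Hs HD [l [Hl Hns]]. apply Hns. intro y.
  rewrite <- (D_closed a b u v w Hw) in HD.
  assert (Hs1 : sin w / w <> 0) by (unfold Rdiv; apply Rmult_integral_contrapositive; split; auto; apply Rinv_neq_0_compat; auto).
  destruct (surj3 _ _ _ _ _ _ Hs1 HD y) as [h Hh].
  exists h. rewrite (fd_unique _ _ _ _ Hl (Exp_diff a b z0 u v w Hw)). exact Hh.
Qed.

Lemma crit_at a b z0 u v w : w <> 0 -> sin w = 0 -> u^2 + v^2 <> 0 ->
  critical_point (Exp (a,b,z0)) (u,v,w).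
Proof.
  intros Hw Hs Huv. exists (Lmap a b u v w). split.
  - apply Exp_diff; auto.
  - intro Hsur. destruct (Hsur (v, -u, 0)) as [h Hh].
    unfold Lmap, lin3 in Hh. rewrite Hs in Hh.
    injection Hh as E1 E2 E3.
    set (kk := w * cos w / w^2) in *.
    assert (F1 : v = u * kk * snd h).
    { rewrite <- E1. unfold kk. field. auto. }
    assert (F2 : - u = v * kk * snd h).
    { rewrite <- E2. unfold kk. field. auto. }
    apply Huv. nra.
Qed.

Theorem corollary12 (x0 y0 z0 u0 v0 w0 : R) :
  x0 ^ 2 + y0 ^ 2 <> 0 ->
  u0 ^ 2 + v0 ^ 2 + (x0 ^ 2 + y0 ^ 2) * w0 ^ 2 = 1 ->
  x0 * v0 - y0 * u0 <> 0 ->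
  x0 * u0 + y0 * v0 <> 0 ->
  w0 <> 0 ->
  t_con (x0, y0, z0) (u0, v0, w0) = Finite (PI / Rabs w0).
Proof.
  intros Hr HE HK HL Hw.
  unfold t_con. apply is_glb_Rbar_unique.
  assert (Haw : 0 < Rabs w0) by (apply Rabs_pos_lt; auto).
  assert (HT : 0 < PI / Rabs w0) by (apply Rdiv_lt_0_compat; [apply PI_RGT_0 | auto]).
  assert (HP0 : u0^2 + v0^2 <> 0).
  { intro H0. apply HK. assert (u0 = 0) by nra. assert (v0 = 0) by nra. subst. ring. }
  assert (Hcrit : critical_point (Exp (x0, y0, z0)) (scal3 (PI / Rabs w0) (u0, v0, w0))).
  { simpl. set (T := PI / Rabs w0) in *.
    assert (HTw : T * w0 = PI \/ T * w0 = - PI).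
    { unfold T. destruct (Rle_lt_dec 0 w0).
      - left. rewrite Rabs_right by lra. field. auto.
      - right. rewrite Rabs_left by lra. field. auto. }
    apply crit_at.
    - destruct HTw as [-> | ->]; [apply PI_neq0 | apply Ropp_neq_0_compat, PI_neq0].
    - destruct HTw as [-> | ->]; [apply sin_PI | rewrite sin_neg, sin_PI; ring].
    - intro H0. apply HP0. assert (0 < T^2) by (apply pow2_gt_0; lra).
      assert (E : (T*u0)^2 + (T*v0)^2 = T^2 * (u0^2+v0^2)) by ring. nra. }
  split.
  - intros t [Ht Hc]. simpl.
    destruct (Rle_lt_dec (PI / Rabs w0) t) as [Hle|Hlt]; [exact Hle|exfalso].
    simpl in Hc.
    set (th := t * w0) in *.
    assert (Hth : Rabs th < PI).
    { unfold th. rewrite Rabs_mult, Rabs_right by lra.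
      apply (Rmult_lt_compat_r (Rabs w0)) in Hlt; auto.
      unfold Rdiv in Hlt. rewrite Rmult_assoc, Rinv_l, Rmult_1_r in Hlt by lra. exact Hlt. }
    assert (Hth0 : th <> 0) by (unfold th; apply Rmult_integral_contrapositive; split; lra).
    set (R0 := x0^2 + y0^2). set (P0 := u0^2+v0^2). set (L0 := x0*u0 + y0*v0).
    assert (Lag : L0^2 <= R0 * P0).
    { assert (R0 * P0 - L0^2 = (x0 * v0 - y0 * u0)^2) by (unfold R0, P0, L0; ring).
      pose proof (pow2_ge_0 (x0 * v0 - y0 * u0)). lra. }
    assert (HR0 : 0 <= R0) by (unfold R0; nra).
    assert (HP0' : 0 <= P0) by (unfold P0; nra).
    assert (HAB : 0 < R0 * w0^2 + P0) by (unfold R0, P0; lra).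
    assert (HM : (w0 * L0)^2 <= (R0 * w0^2) * P0).
    { assert (0 <= w0^2) by apply pow2_ge_0.
      replace ((w0*L0)^2) with (w0^2 * L0^2) by ring.
      replace (R0 * w0^2 * P0) with (w0^2 * (R0 * P0)) by ring.
      apply Rmult_le_compat_l; auto. }
    assert (HA : 0 <= R0 * w0^2) by (apply Rmult_le_pos; [auto|apply pow2_ge_0]).
    set (G := sin th * (R0 * w0^2) + sin th * th * (w0 * L0) + (sin th - th * cos th) * P0).
    assert (HG : G <> 0).
    { destruct (Rle_lt_dec 0 w0) as [Hw0|Hw0].
      - assert (0 < th) by (unfold th; apply Rmult_lt_0_compat; lra).
        rewrite Rabs_right in Hth by lra.
        pose proof (key th (R0 * w0^2) P0 (w0 * L0) (conj H Hth) HA HP0' HAB HM). unfold G. lra.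
      - assert (th < 0) by (unfold th; nra).
        rewrite Rabs_left in Hth by lra.
        assert (HM' : (- (w0 * L0))^2 <= (R0 * w0^2) * P0) by (replace ((- (w0 * L0))^2) with ((w0*L0)^2) by ring; auto).
        assert (Hphi : 0 < - th < PI) by lra.
        pose proof (key (- th) (R0 * w0^2) P0 (- (w0 * L0)) Hphi HA HP0' HAB HM') as K.
        rewrite sin_neg, cos_neg in K.
        unfold G. intro HG0. 
        assert (E : G = - (- sin th * (R0 * w0 ^ 2) + - sin th * - th * - (w0 * L0) + (- sin th - - th * cos th) * P0)) by (unfold G; ring).
        unfold G in E. lra. }
    revert Hc. apply not_crit; auto.
    + destruct (Rle_lt_dec 0 w0) as [Hw0|Hw0].
      * assert (0 < th) by (unfold th; apply Rmult_lt_0_compat; lra).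
        rewrite Rabs_right in Hth by lra.
        assert (0 < sin th) by (apply sin_gt_0; lra). lra.
      * assert (th < 0) by (unfold th; nra).
        rewrite Rabs_left in Hth by lra.
        assert (0 < sin (- th)) by (apply sin_gt_0; lra). rewrite sin_neg in H0. lra.
    + intro HD. apply HG.
      assert (E : th * w0^2 * (sin th / th * (x0^2 + y0^2 + (x0 * (t*u0) + y0 * (t*v0)))
          + (sin th - th * cos th) / th^3 * ((t*u0)^2 + (t*v0)^2)) = G).
      { unfold G, R0, P0, L0, th. field. all: try split. all: auto; lra. }
      rewrite <- E, HD. ring.
  - intros b Hb. apply Hb. split; auto.
Qed.
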